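(* (a) For every natural number $n\geq1$, the powers $\mathcal{R}_{\mathcal{S}}^{\,n}$ and $\mathcal{I}_{\mathcal{S}}^{\,n}$ have a $\pi$-tree. (b) The countable powers $\mathcal{R}_{\mathcal{S}}^{\,\omega}$ and $\mathcal{I}_{\mathcal{S}}^{\,\omega}$ have a $\pi$-tree.
   Context: $\mathcal{R}_{\mathcal{S}}$ is the Sorgenfrey line (reals with the topology generated by $[a,b)$); $\mathcal{I}_{\mathcal{S}}=\mathcal{R}_{\mathcal{S}}\setminus\mathbb{Q}$ is the irrational Sorgenfrey line (subspace). Powers carry the Tychonoff product topology. Neighbourhoods are not necessarily open. ${}^{<\omega}\omega$ is the set of finite sequences of natural numbers. A tree is a strict partial order in which the set of predecessors of every node is well-ordered; a branch is a maximal chain; $\mathrm{sons}(x)$ is the set of immediate successors of $x$; $0$ denotes the least node. A foliage tree is a pair $\mathbf{F}=(T,l)$ with $T$ a tree (skeleton) and $l$ a function on its nodes, $\mathbf{F}_x:=l(x)$; tree notions apply via the skeleton. $\mathrm{shoot}_{\mathbf{F}}(v)=\{\bigcup_{x\in C}\mathbf{F}_x: C\text{ a cofinite subset of }\mathrm{sons}_{\mathbf{F}}(v)\}$; $\mathrm{scope}_{\mathbf{F}}(p)=\{x:p\in\mathbf{F}_x\}$. $\gamma\gg\delta$ means every nonempty $D\in\delta$ contains some nonempty $G\in\gamma$. $\mathbf{F}$ is locally strict if each non-maximal leaf $\mathbf{F}_x$ is the disjoint union of $\mathbf{F}_s$, $s\in\mathrm{sons}(x)$; has strict branches if it has a node and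 for each branch $B$, $\bigcap_{x\in B}\mathbf{F}_x$ is a singleton; is open in $X$ if all leaves are open in $X$; is a foliage $\omega,\omega$-tree if its skeleton is order-isomorphic to $({}^{<\omega}\omega,\subsetneq)$. A Baire foliage tree on $X$ is an open in $X$, locally strict foliage $\omega,\omega$-tree with strict branches and $\mathbf{F}_{0_{\mathbf{F}}}=X$. $\mathbf{F}$ grows into $X$ if for every $p\in X$ and neighbourhood $U$ of $p$ there is $z\in\mathrm{scope}_{\mathbf{F}}(p)$ with $\mathrm{shoot}_{\mathbf{F}}(z)\gg\{U\}$. A $\pi$-tree on $X$ is a Baire foliage tree on $X$ that grows into $X$; a space has a $\pi$-tree if there is one on it. *)

(* Defs.v *)
From Stdlib Require Import Reals List QArith Qreals.
Open Scope R_scope.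

Definition sorg_open (U : R -> Prop) : Prop :=
  forall x, U x -> exists a b, a <= x < b /\ (forall y, a <= y < b -> U y).

Definition irrational (x : R) : Prop := ~ (exists q : Q, x = Q2R q).
Definition Irr : Type := { x : R | irrational x }.
Definition irr_open (V : Irr -> Prop) : Prop :=
  exists U, sorg_open U /\ forall x : Irr, V x <-> U (proj1_sig x).

Definition prod_open {I X : Type} (op : (X -> Prop) -> Prop) (U : (I -> X) -> Prop) : Prop :=
  forall f, U f ->
    exists (L : list I) (V : I -> X -> Prop),
      (forall i, op (V i)) /\ (forall i, In i L -> V i (f i)) /\
      (forall g, (forall i, In i L -> V i (g i)) -> U g).

Definition fin (n : nat) : Type := { i : nat | (i < n)%nat }.

Definition nbhd {X : Type} (op : (X -> Prop) -> Prop) (p : X) (U : X -> Prop) : Prop :=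
  exists V, op V /\ V p /\ (forall q, V q -> U q).

Section Foliage.
Variables (X N : Type) (lt : N -> N -> Prop) (l : N -> X -> Prop).

Definition son (v x : N) : Prop := lt v x /\ ~ (exists y, lt v y /\ lt y x).

Definition is_least (r : N) : Prop := forall x, x = r \/ lt r x.

Definition chain (B : N -> Prop) : Prop :=
  forall x y, B x -> B y -> x = y \/ lt x y \/ lt y x.

Definition branch (B : N -> Prop) : Prop :=
  chain B /\ (forall C, chain C -> (forall x, B x -> C x) -> forall x, C x -> B x).

Definition locally_strict : Prop :=
  forall x, (exists y, lt x y) ->
    (forall p, l x p <-> exists s, son x s /\ l s p) /\
    (forall s s', son x s -> son x s' -> s <> s' -> forall p, ~ (l s p /\ l s' p)).

Definition strict_branches : Prop :=
  inhabited N /\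
  forall B, branch B -> exists p, forall q, (forall x, B x -> l x q) <-> q = p.

Definition open_in (op : (X -> Prop) -> Prop) : Prop := forall x, op (l x).

Definition sprefix (s t : list nat) : Prop := exists u, u <> nil /\ t = s ++ u.

Definition omega_omega_tree : Prop :=
  exists (f : N -> list nat) (g : list nat -> N),
    (forall x, g (f x) = x) /\ (forall s, f (g s) = s) /\
    (forall x y, lt x y <-> sprefix (f x) (f y)).

Definition cofinite_sons (v : N) (C : N -> Prop) : Prop :=
  (forall x, C x -> son v x) /\
  exists L : list N, forall x, son v x -> ~ C x -> In x L.

Definition shoot_refines (v : N) (U : X -> Prop) : Prop :=
  (exists q, U q) ->
  exists C, cofinite_sons v C /\
    (exists q, exists x, C x /\ l x q) /\
    (forall q, (exists x, C x /\ l x q) -> U q).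

Definition grows_into (op : (X -> Prop) -> Prop) : Prop :=
  forall p U, nbhd op p U -> exists z, l z p /\ shoot_refines z U.

Definition baire_foliage_tree (op : (X -> Prop) -> Prop) : Prop :=
  open_in op /\ locally_strict /\ omega_omega_tree /\ strict_branches /\
  exists r, is_least r /\ forall p, l r p.

Definition pi_tree (op : (X -> Prop) -> Prop) : Prop :=
  baire_foliage_tree op /\ grows_into op.
End Foliage.

Definition has_pi_tree {X : Type} (op : (X -> Prop) -> Prop) : Prop :=
  exists (N : Type) (lt : N -> N -> Prop) (l : N -> X -> Prop), pi_tree X N lt l op.

(* Main.v *)
Require Import Defs.
From Stdlib Require Import Reals List QArith Qreals ZArith.
From Stdlib Require Import Lia Lra Classical ClassicalEpsilon FunctionalExtensionality ProofIrrelevance.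
Import ListNotations.

Definition pref (a : nat -> nat) (M : nat) : list nat := map a (seq 0 M).

Lemma pref_length a M : length (pref a M) = M.
Proof. unfold pref. rewrite length_map, length_seq. reflexivity. Qed.

Lemma pref_nth a M i : (i < M)%nat -> nth i (pref a M) 0%nat = a i.
Proof.
  intros H. unfold pref. rewrite nth_indep with (d' := a 0%nat) by (rewrite length_map, length_seq; lia).
  rewrite map_nth, seq_nth by lia. reflexivity.
Qed.

Lemma nth_map_seq {B} (f : nat -> B) k j d : (j < k)%nat -> nth j (map f (seq 0 k)) d = f j.
Proof.
  intros H. rewrite nth_indep with (d' := f 0%nat) by (rewrite length_map, length_seq; lia).
  rewrite map_nth, seq_nth by lia. reflexivity.
Qed.

Lemma pref_S a M : pref a (S M) = pref a M ++ [a M].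
Proof. unfold pref. rewrite seq_S, map_app. reflexivity. Qed.

Lemma list_ext_nth (s t : list nat) : length s = length t ->
  (forall i, (i < length s)%nat -> nth i s 0%nat = nth i t 0%nat) -> s = t.
Proof.
  revert t; induction s as [|x s IH]; intros [|y t] Hl Hn; simpl in *; try lia; auto.
  f_equal. apply (Hn 0%nat); lia. apply IH. lia. intros i Hi. apply (Hn (S i)). lia.
Qed.

Lemma pref_char a (s : list nat) : (forall i, (i < length s)%nat -> a i = nth i s 0%nat) -> s = pref a (length s).
Proof.
  intros H. apply list_ext_nth. rewrite pref_length; auto.
  intros i Hi. rewrite pref_nth by auto. symmetry; auto.
Qed.

Lemma son_char (s t : list nat) : son (list nat) sprefix s t <-> exists k, t = s ++ [k].
Proof.
  split.
  - intros [[u [Hu ->]] Hno]. destruct u as [|k u]; [congruence|].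
    exists k. destruct u as [|k' u]; [reflexivity|].
    exfalso. apply Hno. exists (s ++ [k]). split.
    + exists [k]. split; [congruence|reflexivity].
    + exists (k' :: u). split; [congruence|]. rewrite <- app_assoc. reflexivity.
  - intros [k ->]. split.
    + exists [k]. split; [congruence|reflexivity].
    + intros [y [[u [Hu ->]] [v [Hv Heq]]]].
      rewrite <- app_assoc in Heq. apply app_inv_head in Heq.
      destruct u; [congruence|]. destruct v; [congruence|]. simpl in Heq.
      inversion Heq. destruct u; discriminate.
Qed.

Definition wpre (s t : list nat) := exists u, t = s ++ u.

Lemma chain_wpre (B : list nat -> Prop) : chain (list nat) sprefix B ->
  forall s t, B s -> B t -> wpre s t \/ wpre t s.
Proof.
  intros Hc s t Hs Ht. destruct (Hc s t Hs Ht) as [->|[[u [_ ->]]|[u [_ ->]]]].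
  - left; exists []; rewrite app_nil_r; auto.
  - left; exists u; auto.
  - right; exists u; auto.
Qed.

Lemma wpre_chain (B : list nat -> Prop) :
  (forall s t, B s -> B t -> wpre s t \/ wpre t s) -> chain (list nat) sprefix B.
Proof.
  intros H s t Hs Ht. destruct (H s t Hs Ht) as [[u ->]|[u ->]].
  - destruct u. left; rewrite app_nil_r; auto. right; left; exists (n :: u); split; congruence.
  - destruct u. left; rewrite app_nil_r; auto. right; right; exists (n :: u); split; congruence.
Qed.

Lemma wpre_length s t : wpre s t -> length s = length t -> s = t.
Proof. intros [u ->] H. rewrite length_app in H. destruct u; simpl in H; [rewrite app_nil_r; auto|lia]. Qed.

Lemma wpre_app_inv s k v : wpre (s ++ [k]) (s ++ v) \/ wpre (s ++ v) (s ++ [k]) -> v <> [] -> exists v', v = k :: v'.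
Proof.
  intros [[u Hu]|[u Hu]] Hv.
  - rewrite <- app_assoc in Hu. apply app_inv_head in Hu. simpl in Hu. eauto.
  - rewrite <- app_assoc in Hu. apply app_inv_head in Hu. destruct v; [congruence|].
    simpl in Hu. inversion Hu. eauto.
Qed.

Lemma branch_ext (B : list nat -> Prop) : branch (list nat) sprefix B ->
  forall s, B s -> exists k, B (s ++ [k]).
Proof.
  intros [Hc Hmax] s Hs.
  pose proof (chain_wpre B Hc) as Hw.
  destruct (classic (exists t, B t /\ exists k v, t = s ++ k :: v)) as [[t [Ht [k [v ->]]]]|Hn].
  - exists k. apply (Hmax (fun z => B z \/ z = s ++ [k])).
    + apply wpre_chain. intros a b Ha Hb.
      assert (G : forall c, B c -> wpre c (s ++ [k]) \/ wpre (s ++ [k]) c).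
      { intros c Hc0. destruct (Hw c s Hc0 Hs) as [[u Hu]|[u Hu]].
        - left. exists (u ++ [k]). rewrite Hu, app_assoc. reflexivity.
        - subst c. destruct u as [|x u].
          + left. exists [k]. rewrite app_nil_r. auto.
          + right. destruct (Hw _ _ Hc0 Ht) as [[w Hw0]|[w Hw0]].
            * rewrite <- !app_assoc in Hw0. apply app_inv_head in Hw0. simpl in Hw0. assert (x = k) by (inversion Hw0; auto).
              subst x. exists u. rewrite <- app_assoc. reflexivity.
            * rewrite <- !app_assoc in Hw0. apply app_inv_head in Hw0. simpl in Hw0. assert (x = k) by (inversion Hw0; auto).
              subst x. exists u. rewrite <- app_assoc. reflexivity. }
      destruct Ha as [Ha| ->]; destruct Hb as [Hb| ->]; auto.
      * destruct (G b Hb); tauto.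
      * left; exists []; rewrite app_nil_r; auto.
    + intros; auto.
    + right; auto.
  - exists 0%nat. apply (Hmax (fun z => B z \/ z = s ++ [0%nat])).
    + apply wpre_chain. intros a b Ha Hb.
      assert (G : forall c, B c -> wpre c (s ++ [0%nat])).
      { intros c Hc0. destruct (Hw c s Hc0 Hs) as [[u Hu]|[u Hu]].
        - exists (u ++ [0%nat]). rewrite Hu, app_assoc. reflexivity.
        - subst c. destruct u as [|x u].
          + exists [0%nat]. rewrite app_nil_r. auto.
          + exfalso. apply Hn. exists (s ++ x :: u). split; eauto. }
      destruct Ha as [Ha| ->]; destruct Hb as [Hb| ->].
      * auto.
      * left; apply G; auto.
      * right; apply G; auto.
      * left; exists []; rewrite app_nil_r; auto.
    + intros; auto.
    + right; auto.
Qed.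

Lemma branch_nil (B : list nat -> Prop) : branch (list nat) sprefix B -> B [].
Proof.
  intros [Hc Hmax]. apply (Hmax (fun z => B z \/ z = [])).
  - apply wpre_chain. pose proof (chain_wpre B Hc) as Hw.
    intros a b [Ha| ->] [Hb| ->].
    + auto.
    + right; eexists; reflexivity.
    + left; eexists; reflexivity.
    + left; eexists; reflexivity.
  - auto.
  - auto.
Qed.

Lemma branch_seq (B : list nat -> Prop) : branch (list nat) sprefix B ->
  exists a : nat -> nat, forall s, B s <-> s = pref a (length s).
Proof.
  intros Hb.
  assert (H : forall s, exists k, B s -> B (s ++ [k])).
  { intros s. destruct (classic (B s)) as [Hs|Hs].
    - destruct (branch_ext B Hb s Hs) as [k Hk]. exists k; auto.
    - exists 0%nat; tauto. }
  set (ch := fun s => proj1_sig (constructive_indefinite_description _ (H s))).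
  assert (Hch : forall s, B s -> B (s ++ [ch s])).
  { intros s. unfold ch. destruct (constructive_indefinite_description _ (H s)); auto. }
  set (c := fix c (M : nat) : list nat := match M with O => [] | S M' => c M' ++ [ch (c M')] end).
  exists (fun M => ch (c M)).
  assert (Hc : forall M, c M = pref (fun M => ch (c M)) M /\ B (c M)).
  { induction M as [|M [IH1 IH2]]. split; [reflexivity| exact (branch_nil B Hb)].
    simpl. rewrite pref_S, <- IH1. split; auto. }
  intros s. split.
  - intros Hs. destruct (Hc (length s)) as [H1 H2].
    rewrite <- H1. destruct Hb as [Hch0 _].
    pose proof (chain_wpre B Hch0 s (c (length s)) Hs H2) as [W|W].
    + apply wpre_length; auto. rewrite H1, pref_length; auto.
    + symmetry. apply wpre_length; auto. rewrite H1, pref_length; auto.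
  - intros ->. destruct (Hc (length s)) as [H1 H2]. rewrite <- H1; auto.
Qed.

Section Coding.
Variables (X : Type) (op : (X -> Prop) -> Prop) (Phi : X -> nat -> nat).
Hypothesis Hinj : forall x y, Phi x = Phi y -> x = y.
Hypothesis Hsurj : forall a, exists x, Phi x = a.
Hypothesis Hopen : forall a M, op (fun x => forall i, (i < M)%nat -> Phi x i = a i).
Hypothesis Hgood : forall p U, nbhd op p U -> exists M K, forall x,
  (forall i, (i < M)%nat -> Phi x i = Phi p i) -> (K <= Phi x M)%nat -> U x.

Definition lf (s : list nat) (x : X) : Prop := forall i, (i < length s)%nat -> Phi x i = nth i s 0%nat.

Lemma lf_pref x s : lf s x <-> s = pref (Phi x) (length s).
Proof.
  split.
  - intros H. apply pref_char. auto.
  - intros E i Hi. rewrite E, pref_nth; auto.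
Qed.

Theorem coding_pi_tree : has_pi_tree op.
Proof.
  exists (list nat), sprefix, lf. split; [split; [|split; [|split; [|split]]]|].
  - intros s. exact (Hopen (fun i => nth i s 0%nat) (length s)).
  - intros s _. split.
    + intros p. split.
      * intros Hp. exists (s ++ [Phi p (length s)]). split. apply son_char; eauto.
        intros i Hi. rewrite length_app in Hi; simpl in Hi.
        destruct (Nat.eq_dec i (length s)) as [->|Hne].
        -- rewrite app_nth2, Nat.sub_diag by lia. reflexivity.
        -- rewrite app_nth1 by lia. apply Hp. lia.
      * intros [t [Ht Hp]]. apply son_char in Ht as [k ->]. intros i Hi.
        rewrite (Hp i) by (rewrite length_app; lia). rewrite app_nth1; auto.
    + intros t t' Ht Ht' Hne p [Hp Hp'].
      apply son_char in Ht as [k ->]. apply son_char in Ht' as [k' ->].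
      apply Hne. f_equal. f_equal.
      specialize (Hp (length s)). specialize (Hp' (length s)).
      rewrite length_app in Hp, Hp'. simpl in Hp, Hp'.
      rewrite app_nth2, Nat.sub_diag in Hp, Hp' by lia. simpl in Hp, Hp'.
      rewrite <- Hp, <- Hp' by lia. reflexivity.
  - exists (fun x => x), (fun x => x). split; [|split]; auto. tauto.
  - split. constructor. exact [].
    intros B HB. destruct (branch_seq B HB) as [a Ha].
    destruct (Hsurj a) as [x0 Hx0]. exists x0. intros q. split.
    + intros Hq. apply Hinj. rewrite Hx0. extensionality M.
      assert (HBp : B (pref a (S M))) by (apply Ha; rewrite pref_length; auto).
      specialize (Hq _ HBp M). rewrite pref_length, pref_nth in Hq by lia. apply Hq. lia.
    + intros -> s Hs. apply Ha in Hs. apply lf_pref. rewrite Hx0. exact Hs.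
  - exists []. split.
    + intros x. destruct x as [|k u]. left; auto. right. exists (k :: u). split; [congruence|auto].
    + intros p i Hi. simpl in Hi. lia.
  - intros p U HU. destruct (Hgood p U HU) as [M [K HK]].
    exists (pref (Phi p) M). split.
    + apply lf_pref. rewrite pref_length. auto.
    + intros _. exists (fun t => exists k, (K <= k)%nat /\ t = pref (Phi p) M ++ [k]).
      split; [split|split].
      * intros t [k [_ ->]]. apply son_char. eauto.
      * exists (map (fun k => pref (Phi p) M ++ [k]) (seq 0 K)).
        intros t Ht Hn. apply son_char in Ht as [k ->]. apply in_map_iff. exists k. split; auto.
        apply in_seq. split; [lia|]. destruct (Nat.lt_ge_cases k K); auto. exfalso; apply Hn; eauto.
      * destruct (Hsurj (fun i => if (i <? M)%nat then Phi p i else K)) as [q Hq].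
        exists q, (pref (Phi p) M ++ [K]). split. eauto.
        intros i Hi. rewrite length_app, pref_length in Hi. simpl in Hi. rewrite Hq.
        destruct (Nat.ltb_spec i M).
        -- rewrite app_nth1 by (rewrite pref_length; auto). rewrite pref_nth; auto.
        -- rewrite app_nth2 by (rewrite pref_length; lia). rewrite pref_length.
           replace (i - M)%nat with 0%nat by lia. simpl. reflexivity.
      * intros q [t [[k [Hk ->]] Hq]]. apply HK.
        -- intros i Hi. rewrite (Hq i) by (rewrite length_app, pref_length; simpl; lia).
           rewrite app_nth1 by (rewrite pref_length; auto). rewrite pref_nth; auto.
        -- rewrite (Hq M) by (rewrite length_app, pref_length; simpl; lia).
           rewrite app_nth2 by (rewrite pref_length; lia). rewrite pref_length, Nat.sub_diag. simpl. auto.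
Qed.
End Coding.

Definition tau (x m : nat) : nat * nat :=
  if (x <=? m)%nat then (x, 2 * (m - x))%nat else (m, 2 * (x - m) - 1)%nat.
Definition taui (m r : nat) : nat * nat :=
  if Nat.even r then (m, m + Nat.div2 r)%nat else (m + Nat.div2 (S r), m)%nat.

Lemma taui_tau x m : taui (fst (tau x m)) (snd (tau x m)) = (x, m).
Proof.
  unfold tau, taui. destruct (Nat.leb_spec x m); cbn [fst snd].
  - rewrite Nat.even_even, Nat.div2_double. f_equal. lia.
  - replace (2 * (x - m) - 1)%nat with (2 * (x - m - 1) + 1)%nat by lia.
    rewrite Nat.even_odd. replace (S (2 * (x - m - 1) + 1)) with (2 * (x - m))%nat by lia.
    rewrite Nat.div2_double. f_equal. lia.
Qed.

Lemma tau_taui m r : tau (fst (taui m r)) (snd (taui m r)) = (m, r).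
Proof.
  unfold tau, taui. destruct (Nat.Even_or_Odd r) as [[q ->]|[q ->]].
  - rewrite Nat.even_even, Nat.div2_double. simpl.
    destruct (Nat.leb_spec m (m + q)); [|lia]. f_equal. lia.
  - rewrite Nat.even_odd. replace (S (2 * q + 1)) with (2 * (S q))%nat by lia.
    rewrite Nat.div2_double. cbn [fst snd]. destruct (Nat.leb_spec (m + S q) m); [lia|]. f_equal. lia.
Qed.

Lemma tau_fst x m : (fst (tau x m) <= x /\ fst (tau x m) <= m)%nat.
Proof. unfold tau. destruct (Nat.leb_spec x m); simpl; lia. Qed.

Fixpoint mins (x : nat) (xs : list nat) : list nat :=
  match xs with
  | [] => [x]
  | y :: ys => match mins y ys with
               | [] => [x]
               | m :: rs => fst (tau x m) :: snd (tau x m) :: rs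
               end
  end.

Fixpoint unmins (m : nat) (rs : list nat) : list nat :=
  match rs with
  | [] => [m]
  | r :: rs' => fst (taui m r) :: unmins (snd (taui m r)) rs'
  end.

Definition minsL (l : list nat) := match l with [] => [] | x :: xs => mins x xs end.
Definition unminsL (l : list nat) := match l with [] => [] | x :: xs => unmins x xs end.

Lemma mins_cons x xs : exists m rs, mins x xs = m :: rs /\ length rs = length xs /\
   (forall j, (j < S (length xs))%nat -> (m <= nth j (x :: xs) 0)%nat) /\ unmins m rs = x :: xs.
Proof.
  revert x. induction xs as [|y ys IH]; intros x.
  - exists x, []. simpl. repeat split; auto. intros j Hj. destruct j; [lia|]. lia.
  - destruct (IH y) as [m [rs [E [Hl [Hm Hu]]]]]. simpl. rewrite E.
    exists (fst (tau x m)), (snd (tau x m) :: rs). repeat split.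
    + simpl. lia.
    + intros j Hj. pose proof (tau_fst x m). destruct j; simpl; [lia|].
      specialize (Hm j). simpl in Hm. assert (m <= nth j (y :: ys) 0)%nat by (apply Hm; lia).
      destruct j; simpl in *; lia.
    + simpl. rewrite taui_tau. simpl. rewrite Hu. reflexivity.
Qed.

Lemma minsL_length l : length (minsL l) = length l.
Proof. destruct l as [|x xs]; auto. simpl. destruct (mins_cons x xs) as [m [rs [E [Hl _]]]]. rewrite E; simpl; lia. Qed.

Lemma unminsL_minsL l : unminsL (minsL l) = l.
Proof. destruct l as [|x xs]; auto. simpl. destruct (mins_cons x xs) as [m [rs [E [_ [_ Hu]]]]]. rewrite E; simpl; auto. Qed.

Lemma minsL_unmins m rs : minsL (unmins m rs) = m :: rs.
Proof.
  revert m. induction rs as [|r rs IH]; intros m; auto.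
  simpl. specialize (IH (snd (taui m r))). destruct (unmins (snd (taui m r)) rs) eqn:E.
  - destruct rs; simpl in E; [discriminate|]. discriminate.
  - simpl in IH |- *. rewrite IH. rewrite tau_taui. reflexivity.
Qed.

Lemma minsL_unminsL l : minsL (unminsL l) = l.
Proof. destruct l; auto. apply minsL_unmins. Qed.

Lemma unminsL_length l : length (unminsL l) = length l.
Proof. rewrite <- (minsL_unminsL l) at 2. rewrite minsL_length. auto. Qed.

Lemma minsL_min l j : (j < length l)%nat -> (nth 0 (minsL l) 0 <= nth j l 0)%nat.
Proof.
  destruct l as [|x xs]; simpl; [lia|]. intros Hj.
  destruct (mins_cons x xs) as [m [rs [E [_ [Hm _]]]]]. rewrite E. simpl. apply Hm; auto.
Qed.

Lemma app_inj_len {A} (a b c d : list A) : a ++ b = c ++ d -> length a = length c -> a = c /\ b = d.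
Proof.
  revert c; induction a as [|x a IH]; intros [|y c] E L; simpl in *; try lia; auto.
  inversion E. destruct (IH c H1 ltac:(lia)). subst; auto.
Qed.

Lemma map_seq_ext (f g : nat -> nat) k : map f (seq 0 k) = map g (seq 0 k) -> forall j, (j < k)%nat -> f j = g j.
Proof.
  intros H j Hj. assert (E := f_equal (fun l => nth j l 0%nat) H). simpl in E.
  rewrite !nth_map_seq in E by lia. exact E.
Qed.

Section Product.
Variable kk : nat -> nat.
Hypothesis kk_pos : forall r, (1 <= kk r)%nat.
Hypothesis kk_le : forall r, (kk r <= S r)%nat.
Hypothesis kk_mono : forall r r', (r <= r')%nat -> (kk r <= kk r')%nat.
Hypothesis kk_cov : forall j r r', (j < kk r')%nat -> (j <= r)%nat -> (j < kk r)%nat.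

Definition W := nat -> nat -> nat.

Definition evs (w : W) r := map (fun j => w j (2 * (r - j))%nat) (seq 0 (kk r)).
Definition ods (w : W) r := map (fun j => w j (S (2 * (r - j))))%nat (seq 0 (kk r)).
Definition blk (w : W) r := evs w r ++ minsL (ods w r).

Lemma blk_length w r : length (blk w r) = (2 * kk r)%nat.
Proof. unfold blk, evs, ods. rewrite length_app, minsL_length, !length_map, length_seq. lia. Qed.

Fixpoint st (r : nat) : nat := match r with O => O | S r' => (st r' + 2 * kk r')%nat end.

Lemma st_mono r r' : (r < r')%nat -> (st r + 2 * kk r <= st r')%nat.
Proof. induction r'; intros H; [lia|]. simpl. destruct (Nat.eq_dec r r') as [->|]; [lia|].
  specialize (IHr' ltac:(lia)). lia. Qed.

Lemma st_ge r : (r <= st r)%nat.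
Proof. induction r; simpl; [lia|]. specialize (kk_pos r). lia. Qed.

Fixpoint locf (f r p : nat) : nat * nat :=
  match f with
  | O => (r, p)
  | S f' => if (p <? 2 * kk r)%nat then (r, p) else locf f' (S r) (p - 2 * kk r)
  end.

Definition loc p := locf (S p) 0 p.

Lemma locf_spec f : forall r q, (q < f)%nat ->
  (snd (locf f r q) < 2 * kk (fst (locf f r q)))%nat /\ (st r + q = st (fst (locf f r q)) + snd (locf f r q))%nat.
Proof.
  induction f; intros r q H; [lia|]. cbn [locf]. destruct (Nat.ltb_spec q (2 * kk r)) as [Hq|Hq].
  - cbn [fst snd]. lia.
  - pose proof (kk_pos r). destruct (IHf (S r) (q - 2 * kk r)%nat ltac:(lia)) as [H1 H2].
    split; auto. change (st (S r)) with (st r + 2 * kk r)%nat in H2. lia.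
Qed.

Lemma st_inj r o r' o' : (o < 2 * kk r)%nat -> (o' < 2 * kk r')%nat -> (st r + o = st r' + o')%nat -> r = r' /\ o = o'.
Proof.
  intros H1 H2 E. destruct (Nat.lt_trichotomy r r') as [Hl|[->|Hl]].
  - pose proof (st_mono _ _ Hl). lia.
  - lia.
  - pose proof (st_mono _ _ Hl). lia.
Qed.

Lemma loc_spec p : (snd (loc p) < 2 * kk (fst (loc p)))%nat /\ p = (st (fst (loc p)) + snd (loc p))%nat.
Proof. unfold loc. destruct (locf_spec (S p) 0 p ltac:(lia)) as [H1 H2]. simpl in H2. auto. Qed.

Lemma loc_st r o : (o < 2 * kk r)%nat -> loc (st r + o) = (r, o).
Proof.
  intros H. destruct (loc_spec (st r + o)) as [H1 H2].
  destruct (st_inj _ _ _ _ H1 H (eq_sym H2)) as [E1 E2]. rewrite (surjective_pairing (loc (st r + o))), E1, E2. reflexivity.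
Qed.

Definition Psi (w : W) (p : nat) : nat := nth (snd (loc p)) (blk w (fst (loc p))) 0%nat.

Lemma Psi_at w r o : (o < 2 * kk r)%nat -> Psi w (st r + o) = nth o (blk w r) 0%nat.
Proof. intros H. unfold Psi. rewrite loc_st; auto. Qed.

Lemma nth_blk_ev w r j : (j < kk r)%nat -> nth j (blk w r) 0%nat = w j (2 * (r - j))%nat.
Proof.
  intros H. unfold blk. rewrite app_nth1 by (unfold evs; rewrite length_map, length_seq; lia).
  unfold evs. rewrite nth_map_seq by lia. reflexivity.
Qed.

Lemma nth_blk_min w r j : (j < kk r)%nat -> (nth (kk r) (blk w r) 0 <= w j (S (2 * (r - j))))%nat.
Proof.
  intros H. unfold blk. rewrite app_nth2 by (unfold evs; rewrite length_map, length_seq; lia).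
  unfold evs at 1. rewrite length_map, length_seq, Nat.sub_diag.
  eapply Nat.le_trans. apply minsL_min with (j := j). unfold ods; rewrite length_map, length_seq; lia.
  unfold ods. rewrite nth_map_seq by lia. simpl. lia.
Qed.

Lemma blk_inj w w' r : blk w r = blk w' r -> forall j, (j < kk r)%nat ->
  w j (2 * (r - j))%nat = w' j (2 * (r - j))%nat /\ w j (S (2 * (r - j))) = w' j (S (2 * (r - j))).
Proof.
  intros E. unfold blk in E.
  assert (Le : length (evs w r) = length (evs w' r)) by (unfold evs; rewrite !length_map; auto).
  apply app_inj_len in E as [E1 E2]; auto.
  apply (f_equal unminsL) in E2. rewrite !unminsL_minsL in E2.
  intros j Hj. split.
  - exact (map_seq_ext _ _ _ E1 j Hj).
  - exact (map_seq_ext _ _ _ E2 j Hj).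
Qed.

Lemma blk_local w w' r : (forall j t, (j < kk r)%nat -> (t <= S (2 * r))%nat -> w j t = w' j t) -> blk w r = blk w' r.
Proof.
  intros H. unfold blk, evs, ods. f_equal.
  - apply map_ext_in. intros j Hj. apply in_seq in Hj. apply H; lia.
  - f_equal. apply map_ext_in. intros j Hj. apply in_seq in Hj. apply H; lia.
Qed.

Lemma Psi_ext w w' : (forall r j, (j < kk r)%nat -> w j = w' j) -> Psi w = Psi w'.
Proof.
  intros H. extensionality p. unfold Psi. f_equal. apply blk_local. intros j t Hj _. rewrite (H _ _ Hj). auto.
Qed.

Lemma digit_decomp t : t = (2 * Nat.div2 t + (if Nat.even t then 0 else 1))%nat.
Proof.
  destruct (Nat.Even_or_Odd t) as [[q ->]|[q ->]].
  - rewrite Nat.even_even, Nat.div2_double. lia.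
  - rewrite Nat.even_odd, Nat.div2_odd'. lia.
Qed.

Lemma div2_bound t m : (t < S (2 * m))%nat -> (Nat.div2 t <= m)%nat /\ (Nat.div2 t = m -> t = 2 * m)%nat.
Proof.
  intros H. pose proof (digit_decomp t) as D. destruct (Nat.even t);
  generalize dependent (Nat.div2 t); intros q D; split; intros; lia.
Qed.

Lemma blk_digit w w' j t : blk w (j + Nat.div2 t) = blk w' (j + Nat.div2 t) -> (j < kk (j + Nat.div2 t))%nat -> w j t = w' j t.
Proof.
  intros Eb Hj. destruct (blk_inj _ _ _ Eb j Hj) as [H1 H2].
  replace (j + Nat.div2 t - j)%nat with (Nat.div2 t) in H1, H2 by (rewrite Nat.add_comm, Nat.add_sub; auto).
  rewrite (digit_decomp t). destruct (Nat.even t); [rewrite Nat.add_0_r; auto|].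
  rewrite Nat.add_1_r. auto.
Qed.

Lemma Psi_inj w w' : Psi w = Psi w' -> forall j t, (j < kk (j + Nat.div2 t))%nat -> w j t = w' j t.
Proof.
  intros E j t Hj. set (r := (j + Nat.div2 t)%nat) in *.
  assert (Eb : blk w r = blk w' r).
  { apply list_ext_nth. rewrite !blk_length; auto. rewrite blk_length. intros o Ho.
    rewrite <- !Psi_at by auto. rewrite E. auto. }
  apply blk_digit; auto.
Qed.

Definition unPsi (a : nat -> nat) : W :=
  fun j t => let r := (j + Nat.div2 t)%nat in
    let b := map (fun o => a (st r + o)%nat) (seq 0 (2 * kk r)) in
    if Nat.even t then nth j (firstn (kk r) b) 0%nat else nth j (unminsL (skipn (kk r) b)) 0%nat.

Lemma Psi_unPsi a : Psi (unPsi a) = a.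
Proof.
  extensionality p. destruct (loc_spec p) as [H1 H2]. rewrite H2.
  set (r := fst (loc p)) in *. set (o := snd (loc p)) in *. clearbody r o. clear H2.
  rewrite Psi_at by auto.
  set (b := map (fun o => a (st r + o)%nat) (seq 0 (2 * kk r))).
  assert (Hb : blk (unPsi a) r = b).
  { rewrite <- (firstn_skipn (kk r) b). unfold blk. f_equal.
    - apply list_ext_nth. unfold evs. rewrite length_map, length_seq, length_firstn.
      unfold b. rewrite length_map, length_seq. lia.
      intros j Hj. unfold evs in Hj. rewrite length_map, length_seq in Hj.
      unfold evs. rewrite nth_map_seq by lia. cbv beta. unfold unPsi.
      rewrite Nat.even_even, Nat.div2_double. replace (j + (r - j))%nat with r by (pose proof (kk_le r); lia). reflexivity.
    - rewrite <- (minsL_unminsL (skipn (kk r) b)). f_equal.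
      apply list_ext_nth. unfold ods. rewrite length_map, length_seq, unminsL_length, length_skipn.
      unfold b. rewrite length_map, length_seq. lia.
      intros j Hj. unfold ods in Hj. rewrite length_map, length_seq in Hj.
      unfold ods. rewrite nth_map_seq by lia. cbv beta. unfold unPsi.
      replace (S (2 * (r - j))) with (2 * (r - j) + 1)%nat by lia.
      rewrite Nat.even_odd, Nat.div2_odd'. replace (j + (r - j))%nat with r by (pose proof (kk_le r); lia). reflexivity. }
  rewrite Hb. unfold b. rewrite nth_map_seq by lia. reflexivity.
Qed.

Lemma Psi_local w w' R : (forall j t, (j < kk R)%nat -> (t < 2 * R + 2)%nat -> w j t = w' j t) ->
  forall p, (p < R)%nat -> Psi w p = Psi w' p.
Proof.
  intros H p Hp. destruct (loc_spec p) as [H1 H2]. unfold Psi. f_equal.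
  assert (fst (loc p) < R)%nat.
  { destruct (Nat.lt_ge_cases (fst (loc p)) R) as [|Hge]; auto.
    pose proof (st_ge (fst (loc p))). lia. }
  apply blk_local. intros j t Hj Ht. apply H.
  pose proof (kk_mono (fst (loc p)) R ltac:(lia)). lia. lia.
Qed.

Lemma Psi_good w w' R : (forall p, (p < st R + kk R)%nat -> Psi w p = Psi w' p) ->
  forall j, (j < kk R)%nat ->
  (forall t, (t < S (2 * (R - j)))%nat -> w j t = w' j t) /\ (Psi w (st R + kk R) <= w j (S (2 * (R - j))))%nat.
Proof.
  intros H j Hj. split.
  - intros t Ht. set (r := (j + Nat.div2 t)%nat).
    pose proof (kk_le R). destruct (div2_bound t (R - j) Ht) as [D1 D2].
    assert (Hr : (r <= R)%nat) by (unfold r; lia).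
    destruct (Nat.eq_dec r R) as [Er|Er].
    + assert (Ht2 : t = (2 * (R - j))%nat) by (apply D2; unfold r in Er; lia).
      pose proof (kk_pos R). specialize (H (st R + j)%nat ltac:(lia)).
      rewrite !Psi_at in H by lia. rewrite !nth_blk_ev in H by auto. rewrite Ht2; auto.
    + assert (Eb : blk w r = blk w' r).
      { apply list_ext_nth. rewrite !blk_length; auto. rewrite blk_length. intros o Ho.
        rewrite <- !Psi_at by auto. apply H. pose proof (st_mono r R ltac:(lia)). lia. }
      apply blk_digit; auto. apply (kk_cov j r R); auto. unfold r. apply Nat.le_add_r.
  - pose proof (kk_pos R). rewrite Psi_at by lia. apply nth_blk_min; auto.
Qed.

End Product.

Section ProdCoding.
Variables (Y : Type) (opY : (Y -> Prop) -> Prop) (phi : Y -> nat -> nat).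
Hypothesis phi_inj : forall x y, phi x = phi y -> x = y.
Hypothesis phi_surj : forall a, exists y, phi y = a.
Hypothesis phi_open : forall a M, opY (fun y => forall t, (t < M)%nat -> phi y t = a t).
Hypothesis phi_good : forall y V, opY V -> V y -> exists N, forall j, (N <= j)%nat -> exists K, forall y',
  (forall t, (t < S (2 * j))%nat -> phi y' t = phi y t) -> (K <= phi y' (S (2 * j)))%nat -> V y'.
Variables (I : Type) (e : I -> nat) (d : nat -> I) (kk : nat -> nat).
Hypothesis kk_pos : forall r, (1 <= kk r)%nat.
Hypothesis kk_le : forall r, (kk r <= S r)%nat.
Hypothesis kk_mono : forall r r', (r <= r')%nat -> (kk r <= kk r')%nat.
Hypothesis kk_cov : forall j r r', (j < kk r')%nat -> (j <= r)%nat -> (j < kk r)%nat.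
Hypothesis de : forall i, d (e i) = i.
Hypothesis ed : forall j r, (j < kk r)%nat -> e (d j) = j.
Hypothesis e_kk : forall i r, (e i <= r)%nat -> (e i < kk r)%nat.

Definition wx (x : I -> Y) : W := fun j => phi (x (d j)).
Definition PhiP (x : I -> Y) : nat -> nat := Psi kk (wx x).

Lemma choose_R (p : I -> Y) (L : list I) (V : I -> Y -> Prop) : (forall i, opY (V i)) -> (forall i, In i L -> V i (p i)) ->
  exists R0, forall R, (R0 <= R)%nat -> exists K, forall i, In i L -> (e i <= R)%nat /\ forall y',
   (forall t, (t < S (2 * (R - e i)))%nat -> phi y' t = phi (p i) t) -> (K <= phi y' (S (2 * (R - e i))))%nat -> V i y'.
Proof.
  intros Hop. induction L as [|i L IH]; intros HL.
  - exists 0%nat. intros R _. exists 0%nat. intros i [].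
  - destruct IH as [R1 HR1]. intros i' Hi'. apply HL. right; auto.
    destruct (phi_good (p i) (V i) (Hop i) (HL i (or_introl eq_refl))) as [N HN].
    exists (Nat.max R1 (e i + N)). intros R HR.
    destruct (HR1 R ltac:(lia)) as [K1 HK1].
    destruct (HN (R - e i)%nat ltac:(lia)) as [K2 HK2].
    exists (Nat.max K1 K2). intros i' [<-|Hi'].
    + split; [lia|]. intros y' H1 H2. apply HK2; auto. lia.
    + destruct (HK1 i' Hi') as [H0 H1]. split; auto. intros y' H2 H3. apply H1; auto. lia.
Qed.

Theorem prod_has_pi_tree : has_pi_tree (@prod_open I Y opY).
Proof.
  apply (coding_pi_tree _ _ PhiP).
  - intros x x' E. extensionality i. apply phi_inj. extensionality t.
    unfold PhiP in E. pose proof (Psi_inj kk kk_pos _ _ E (e i) t) as H.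
    unfold wx in H. rewrite de in H. apply H. apply e_kk. apply Nat.le_add_r.
  - intros a. set (w := unPsi kk a).
    set (x := fun i => proj1_sig (constructive_indefinite_description _ (phi_surj (w (e i))))).
    exists x. unfold PhiP. rewrite <- (Psi_unPsi kk kk_pos kk_le a). apply Psi_ext.
    intros r j Hj. unfold wx, x. destruct (constructive_indefinite_description _ _) as [y Hy]. simpl.
    rewrite Hy. rewrite (ed j r Hj). reflexivity.
  - intros a M f Hf. exists (map d (seq 0 (kk M))), (fun i y => forall t, (t < 2 * M + 2)%nat -> phi y t = phi (f i) t).
    split; [|split].
    + intros i. apply phi_open.
    + intros i _ t _. reflexivity.
    + intros g Hg p Hp. rewrite <- (Hf p Hp). unfold PhiP.
      apply (Psi_local kk kk_pos kk_mono _ _ M); auto.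
      intros j t Hj Ht. unfold wx. apply Hg; auto. apply in_map. apply in_seq. lia.
  - intros p U [V0 [HV0 [HpV0 HVU]]].
    destruct (HV0 p HpV0) as [L [V [Hop [HL Hbox]]]].
    destruct (choose_R p L V Hop HL) as [R0 HR0].
    destruct (HR0 R0 (le_n _)) as [K HK].
    exists (st kk R0 + kk R0)%nat, K. intros x Hx HKx. apply HVU. apply Hbox.
    intros i Hi. destruct (HK i Hi) as [Hle HV].
    assert (Hj : (e i < kk R0)%nat) by (apply e_kk; auto).
    destruct (Psi_good kk kk_pos kk_le kk_cov (wx x) (wx p) R0 Hx (e i) Hj) as [G1 G2].
    unfold wx in G1, G2. rewrite de in G1, G2. apply HV.
    + intros t Ht. apply G1; auto.
    + unfold PhiP, wx in HKx. lia.
Qed.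
End ProdCoding.

Open Scope R_scope.

Definition vec := (Z * Z)%type.
Definition vl (v : vec) : R := IZR (snd v) / IZR (fst v).
Record node := mkN { nz : Z; v1 : vec; v2 : vec }.
Definition lin (a b : Z) (N : node) : vec :=
  (a * fst (v1 N) + b * fst (v2 N), a * snd (v1 N) + b * snd (v2 N))%Z.
Definition pt (N : node) (a b : Z) : R := IZR (nz N) + vl (lin a b N).
Definition lo N := IZR (nz N) + vl (v1 N).
Definition hi N := IZR (nz N) + vl (v2 N).
Definition ok N := (0 < fst (v1 N))%Z /\ (0 < fst (v2 N))%Z /\
   (fst (v1 N) * snd (v2 N) - fst (v2 N) * snd (v1 N) = 1)%Z.
Definition sgm N := (fst (v1 N) + fst (v2 N))%Z.

Lemma lin10 N : lin 1 0 N = v1 N.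
Proof. destruct N as [n [s1 y1] [s2 y2]]. unfold lin. cbn [fst snd v1 v2]. f_equal; lia. Qed.
Lemma lin01 N : lin 0 1 N = v2 N.
Proof. destruct N as [n [s1 y1] [s2 y2]]. unfold lin. cbn [fst snd v1 v2]. f_equal; lia. Qed.
Lemma pt10 N : pt N 1 0 = lo N.
Proof. unfold pt, lo. rewrite lin10. auto. Qed.
Lemma pt01 N : pt N 0 1 = hi N.
Proof. unfold pt, hi. rewrite lin01. auto. Qed.

Lemma pt_diff N a b a' b' : ok N -> (0 <= a)%Z -> (0 <= b)%Z -> (0 < a + b)%Z ->
  (0 <= a')%Z -> (0 <= b')%Z -> (0 < a' + b')%Z ->
  pt N a' b' - pt N a b = IZR (a * b' - a' * b) / (IZR (a * fst (v1 N) + b * fst (v2 N)) * IZR (a' * fst (v1 N) + b' * fst (v2 N))).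
Proof.
  destruct N as [n [s1 y1] [s2 y2]]. unfold ok, pt, vl, lin; simpl. intros [Hs1 [Hs2 Hd]] Ha Hb Hab Ha' Hb' Hab'.
  assert (P1 : (0 < a * s1 + b * s2)%Z) by nia.
  assert (P2 : (0 < a' * s1 + b' * s2)%Z) by nia.
  assert (E : ((a' * y1 + b' * y2) * (a * s1 + b * s2) - (a * y1 + b * y2) * (a' * s1 + b' * s2) = a * b' - a' * b)%Z).
  { replace (a * b' - a' * b)%Z with ((a * b' - a' * b) * (s1 * y2 - s2 * y1))%Z by (rewrite Hd; ring). ring. }
  apply IZR_lt in P1. apply IZR_lt in P2.
  rewrite <- E. rewrite minus_IZR, !mult_IZR. field. lra.
Qed.

Lemma pt_le N a b a' b' : ok N -> (0 <= a)%Z -> (0 <= b)%Z -> (0 < a + b)%Z ->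
  (0 <= a')%Z -> (0 <= b')%Z -> (0 < a' + b')%Z -> (0 <= a * b' - a' * b)%Z -> pt N a b <= pt N a' b'.
Proof.
  intros Hok Ha Hb Hab Ha' Hb' Hab' Hd. pose proof (pt_diff N a b a' b' Hok Ha Hb Hab Ha' Hb' Hab') as E.
  destruct Hok as [Hs1 [Hs2 _]].
  assert (P1 : (0 < a * fst (v1 N) + b * fst (v2 N))%Z) by nia.
  assert (P2 : (0 < a' * fst (v1 N) + b' * fst (v2 N))%Z) by nia.
  apply IZR_lt in P1. apply IZR_lt in P2. apply IZR_le in Hd.
  assert (0 <= IZR (a * b' - a' * b) / (IZR (a * fst (v1 N) + b * fst (v2 N)) * IZR (a' * fst (v1 N) + b' * fst (v2 N)))).
  { apply Rmult_le_pos; auto. left. apply Rinv_0_lt_compat. apply Rmult_lt_0_compat; auto. }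
  lra.
Qed.

Lemma pt_lt N a b a' b' : ok N -> (0 <= a)%Z -> (0 <= b)%Z -> (0 < a + b)%Z ->
  (0 <= a')%Z -> (0 <= b')%Z -> (0 < a' + b')%Z -> (0 < a * b' - a' * b)%Z -> pt N a b < pt N a' b'.
Proof.
  intros Hok Ha Hb Hab Ha' Hb' Hab' Hd. pose proof (pt_diff N a b a' b' Hok Ha Hb Hab Ha' Hb' Hab') as E.
  destruct Hok as [Hs1 [Hs2 _]].
  assert (P1 : (0 < a * fst (v1 N) + b * fst (v2 N))%Z) by nia.
  assert (P2 : (0 < a' * fst (v1 N) + b' * fst (v2 N))%Z) by nia.
  apply IZR_lt in P1. apply IZR_lt in P2. apply IZR_lt in Hd.
  assert (0 < IZR (a * b' - a' * b) / (IZR (a * fst (v1 N) + b * fst (v2 N)) * IZR (a' * fst (v1 N) + b' * fst (v2 N)))).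
  { apply Rmult_lt_0_compat; auto. apply Rinv_0_lt_compat. apply Rmult_lt_0_compat; auto. }
  lra.
Qed.

Lemma len_node N : ok N -> hi N - lo N = / (IZR (fst (v1 N)) * IZR (fst (v2 N))).
Proof.
  intros Hok. rewrite <- pt10, <- pt01. rewrite pt_diff by (auto; lia).
  replace (1 * 1 - 0 * 0)%Z with 1%Z by ring.
  replace (1 * fst (v1 N) + 0 * fst (v2 N))%Z with (fst (v1 N)) by ring.
  replace (0 * fst (v1 N) + 1 * fst (v2 N))%Z with (fst (v2 N)) by ring.
  unfold Rdiv. rewrite Rmult_1_l. auto.
Qed.

Definition ca1 (b : bool) (k : nat) : Z := if b then (if Nat.even k then 1 else Z.of_nat (Nat.div2 k) + 2) else 1.
Definition cb1 (b : bool) (k : nat) : Z := if b then (if Nat.even k then Z.of_nat (Nat.div2 k) + 1 else 1) else Z.of_nat k.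
Definition ca2 (b : bool) (k : nat) : Z := if b then (if Nat.even k then 1 else Z.of_nat (Nat.div2 k) + 1) else 1.
Definition cb2 (b : bool) (k : nat) : Z := if b then (if Nat.even k then Z.of_nat (Nat.div2 k) + 2 else 1) else Z.of_nat k + 1.

Definition fson (b : bool) (N : node) (k : nat) : node :=
  mkN (nz N) (lin (ca1 b k) (cb1 b k) N) (lin (ca2 b k) (cb2 b k) N).

Lemma coef_props b k : (1 <= ca1 b k)%Z /\ (0 <= cb1 b k)%Z /\ (1 <= ca2 b k)%Z /\ (1 <= cb2 b k)%Z /\
  (ca1 b k * cb2 b k - ca2 b k * cb1 b k = 1)%Z /\ (b = true -> (1 <= cb1 b k)%Z).
Proof.
  unfold ca1, cb1, ca2, cb2. destruct b; [destruct (Nat.even k)|]; generalize (Nat.div2 k); intros q; repeat split; intros; try discriminate; lia.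
Qed.

Lemma lo_son b N k : lo (fson b N k) = pt N (ca1 b k) (cb1 b k).
Proof. reflexivity. Qed.
Lemma hi_son b N k : hi (fson b N k) = pt N (ca2 b k) (cb2 b k).
Proof. reflexivity. Qed.

Lemma fson_ok b N k : ok N -> ok (fson b N k).
Proof.
  destruct N as [n [s1 y1] [s2 y2]]. unfold ok, fson, lin; simpl. intros [H1 [H2 H3]].
  destruct (coef_props b k) as [C1 [C2 [C3 [C4 [C5 _]]]]].
  set (a1 := ca1 b k) in *. set (b1 := cb1 b k) in *. set (a2 := ca2 b k) in *. set (b2 := cb2 b k) in *.
  split; [nia|split; [nia|]].
  replace 1%Z with ((a1 * b2 - a2 * b1) * (s1 * y2 - s2 * y1))%Z by (rewrite C5, H3; ring). ring.
Qed.

Lemma fson_sig b N k : ok N -> (sgm N + 1 <= sgm (fson b N k))%Z.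
Proof.
  destruct N as [n [s1 y1] [s2 y2]]. unfold ok, sgm, fson, lin; simpl. intros [H1 [H2 H3]].
  destruct (coef_props b k) as [C1 [C2 [C3 [C4 [C5 _]]]]]. nia.
Qed.

Lemma fson_lo b N k : ok N -> lo N <= lo (fson b N k).
Proof.
  intros Hok. rewrite lo_son, <- pt10. destruct (coef_props b k) as [C1 [C2 [C3 [C4 [C5 _]]]]].
  apply pt_le; auto; lia.
Qed.

Lemma fson_lo_strict N k : ok N -> lo N < lo (fson true N k).
Proof.
  intros Hok. rewrite lo_son, <- pt10. destruct (coef_props true k) as [C1 [C2 [C3 [C4 [C5 C6]]]]].
  specialize (C6 eq_refl). apply pt_lt; auto; lia.
Qed.

Lemma fson_hi b N k : ok N -> hi (fson b N k) < hi N.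
Proof.
  intros Hok. rewrite hi_son, <- pt01. destruct (coef_props b k) as [C1 [C2 [C3 [C4 [C5 _]]]]].
  apply pt_lt; auto; lia.
Qed.

Lemma fson_lohi b N k : ok N -> lo (fson b N k) < hi (fson b N k).
Proof.
  intros Hok. rewrite lo_son, hi_son. destruct (coef_props b k) as [C1 [C2 [C3 [C4 [C5 _]]]]].
  apply pt_lt; auto; lia.
Qed.

Lemma lohi N : ok N -> lo N < hi N.
Proof. intros Hok. rewrite <- pt10, <- pt01. apply pt_lt; auto; lia. Qed.

Lemma small_inv eps : 0 < eps -> exists k : nat, forall P : Z, (Z.of_nat k < P)%Z -> / IZR P < eps.
Proof.
  intros He. destruct (archimed (/ eps)) as [H1 _].
  exists (Z.to_nat (up (/ eps))). intros P HP.
  assert (HP' : (up (/ eps) < P)%Z) by lia.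
  apply IZR_lt in HP'. assert (0 < / eps) by (apply Rinv_0_lt_compat; auto).
  rewrite <- (Rinv_inv eps). apply Rinv_lt_contravar. apply Rmult_lt_0_compat; lra. lra.
Qed.

Lemma step_up (u : nat -> R) x : u 0%nat <= x -> forall k, x < u k -> exists j, u j <= x < u (S j).
Proof.
  intros H0 k. induction k; intros Hk; [lra|].
  destruct (Rlt_or_le x (u k)) as [Hl|Hl]; auto. exists k; auto.
Qed.

Lemma step_down (w : nat -> R) x : x < w 0%nat -> forall k, w k <= x -> exists j, w (S j) <= x < w j.
Proof.
  intros H0 k. induction k; intros Hk; [lra|].
  destruct (Rle_or_lt (w k) x) as [Hl|Hl]; auto. exists k; auto.
Qed.

Lemma pb1 s1 s2 K : (0 < s1)%Z -> (0 < s2)%Z -> (0 <= K)%Z -> (K < (1 * s1 + K * s2) * (0 * s1 + 1 * s2))%Z.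
Proof. intros. assert (0 <= (s1 + K * s2) * (s2 - 1))%Z by (apply Z.mul_nonneg_nonneg; nia). nia. Qed.
Lemma pb2 s1 s2 K : (0 < s1)%Z -> (0 < s2)%Z -> (0 <= K)%Z -> (K < (1 * s1 + 0 * s2) * ((K + 1) * s1 + 1 * s2))%Z.
Proof. intros. assert (0 <= ((K+1) * s1 + s2) * (s1 - 1))%Z by (apply Z.mul_nonneg_nonneg; nia). nia. Qed.

Lemma approach_hi N x : ok N -> x < hi N -> exists k : nat, x < pt N 1 (Z.of_nat k).
Proof.
  intros Hok Hx. destruct (small_inv (hi N - x) ltac:(lra)) as [k Hk]. exists k.
  rewrite <- pt01 in Hx. pose proof (pt_diff N 1 (Z.of_nat k) 0 1 Hok ltac:(lia) ltac:(lia) ltac:(lia) ltac:(lia) ltac:(lia) ltac:(lia)) as E.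
  replace (1 * 1 - 0 * Z.of_nat k)%Z with 1%Z in E by ring.
  destruct Hok as [H1 [H2 _]].
  assert (Hk0 : (0 <= Z.of_nat k)%Z) by lia.
  assert (Hp : (Z.of_nat k < (1 * fst (v1 N) + Z.of_nat k * fst (v2 N)) * (0 * fst (v1 N) + 1 * fst (v2 N)))%Z).
  { apply pb1; auto. }
  specialize (Hk _ Hp).
  rewrite mult_IZR in Hk. unfold Rdiv in E. rewrite Rmult_1_l in E. rewrite <- pt01 in Hk. lra.
Qed.

Lemma approach_lo N x : ok N -> lo N < x -> exists k : nat, pt N (Z.of_nat k + 1) 1 <= x.
Proof.
  intros Hok Hx. destruct (small_inv (x - lo N) ltac:(lra)) as [k Hk]. exists k.
  rewrite <- pt10 in Hx. pose proof (pt_diff N 1 0 (Z.of_nat k + 1) 1 Hok ltac:(lia) ltac:(lia) ltac:(lia) ltac:(lia) ltac:(lia) ltac:(lia)) as E.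
  replace (1 * 1 - (Z.of_nat k + 1) * 0)%Z with 1%Z in E by ring.
  destruct Hok as [H1 [H2 _]].
  assert (Hk0 : (0 <= Z.of_nat k)%Z) by lia.
  assert (Hp : (Z.of_nat k < (1 * fst (v1 N) + 0 * fst (v2 N)) * ((Z.of_nat k + 1) * fst (v1 N) + 1 * fst (v2 N)))%Z).
  { apply pb2; auto. }
  specialize (Hk _ Hp).
  rewrite mult_IZR in Hk. unfold Rdiv in E. rewrite Rmult_1_l in E. rewrite <- pt10 in Hk. lra.
Qed.

Lemma coef_even j : ca1 true (2 * j) = 1%Z /\ cb1 true (2 * j) = (Z.of_nat j + 1)%Z /\
  ca2 true (2 * j) = 1%Z /\ cb2 true (2 * j) = (Z.of_nat j + 2)%Z.
Proof. unfold ca1, cb1, ca2, cb2. rewrite Nat.even_even, Nat.div2_double. auto. Qed.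

Lemma coef_odd j : ca1 true (2 * j + 1) = (Z.of_nat j + 2)%Z /\ cb1 true (2 * j + 1) = 1%Z /\
  ca2 true (2 * j + 1) = (Z.of_nat j + 1)%Z /\ cb2 true (2 * j + 1) = 1%Z.
Proof. unfold ca1, cb1, ca2, cb2. rewrite Nat.even_odd, Nat.div2_odd'. auto. Qed.

Definition inN N x := lo N <= x < hi N.

Lemma cover_false N x : ok N -> inN N x -> exists k, inN (fson false N k) x.
Proof.
  intros Hok [Hl Hh]. destruct (approach_hi N x Hok Hh) as [k Hk].
  destruct (step_up (fun k => pt N 1 (Z.of_nat k)) x) with (k := k) as [j Hj]; auto.
  - simpl. rewrite pt10. auto.
  - exists j. unfold inN. rewrite lo_son, hi_son. unfold ca1, cb1, ca2, cb2.
    rewrite Nat2Z.inj_succ in Hj. unfold Z.succ in Hj. exact Hj.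
Qed.

Lemma cover_true N x : ok N -> lo N < x -> x < hi N -> exists k, inN (fson true N k) x.
Proof.
  intros Hok Hl Hh. destruct (Rle_or_lt (pt N 1 1) x) as [Hm|Hm].
  - destruct (approach_hi N x Hok Hh) as [k Hk].
    assert (Hk' : x < pt N 1 (Z.of_nat k + 1)).
    { eapply Rlt_le_trans; [apply Hk|]. apply pt_le; auto; lia. }
    destruct (step_up (fun k => pt N 1 (Z.of_nat k + 1)) x) with (k := k) as [j Hj]; auto.
    exists (2 * j)%nat. unfold inN. rewrite lo_son, hi_son.
    destruct (coef_even j) as [-> [-> [-> ->]]]. rewrite Nat2Z.inj_succ in Hj. unfold Z.succ in Hj.
    replace (Z.of_nat j + 1 + 1)%Z with (Z.of_nat j + 2)%Z in Hj by ring. exact Hj.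
  - destruct (approach_lo N x Hok Hl) as [k Hk].
    destruct (step_down (fun k => pt N (Z.of_nat k + 1) 1) x) with (k := k) as [j Hj]; auto.
    exists (2 * j + 1)%nat. unfold inN. rewrite lo_son, hi_son.
    destruct (coef_odd j) as [-> [-> [-> ->]]]. rewrite Nat2Z.inj_succ in Hj. unfold Z.succ in Hj.
    replace (Z.of_nat j + 1 + 1)%Z with (Z.of_nat j + 2)%Z in Hj by ring. lra.
Qed.

Definition Dc b k k' := (ca2 b k * cb1 b k' - ca1 b k' * cb2 b k)%Z.

Lemma Dc_total b k k' : k <> k' -> (0 <= Dc b k k')%Z \/ (0 <= Dc b k' k)%Z.
Proof.
  intros Hne. unfold Dc. destruct b.
  - destruct (Nat.Even_or_Odd k) as [[j ->]|[j ->]]; destruct (Nat.Even_or_Odd k') as [[j' ->]|[j' ->]].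
    + destruct (coef_even j) as [-> [-> [-> ->]]]. destruct (coef_even j') as [-> [-> [-> ->]]].
      destruct (Nat.lt_ge_cases j j'); [left|right]; lia.
    + destruct (coef_even j) as [-> [-> [-> ->]]]. destruct (coef_odd j') as [-> [-> [-> ->]]].
      right; nia.
    + destruct (coef_odd j) as [-> [-> [-> ->]]]. destruct (coef_even j') as [-> [-> [-> ->]]].
      left; nia.
    + destruct (coef_odd j) as [-> [-> [-> ->]]]. destruct (coef_odd j') as [-> [-> [-> ->]]].
      destruct (Nat.lt_ge_cases j j'); [right|left]; lia.
  - unfold ca1, cb1, ca2, cb2. destruct (Nat.lt_ge_cases k k'); [left|right]; lia.
Qed.

Lemma fson_disj b N k k' x : ok N -> inN (fson b N k) x -> inN (fson b N k') x -> k = k'.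
Proof.
  intros Hok [H1 H2] [H3 H4]. destruct (Nat.eq_dec k k') as [|Hne]; auto. exfalso.
  rewrite lo_son, hi_son in *.
  destruct (coef_props b k) as [C1 [C2 [C3 [C4 [C5 _]]]]].
  destruct (coef_props b k') as [C1' [C2' [C3' [C4' [C5' _]]]]].
  destruct (Dc_total b k k' Hne) as [D|D]; unfold Dc in D.
  - assert (pt N (ca2 b k) (cb2 b k) <= pt N (ca1 b k') (cb1 b k')) by (apply pt_le; auto; lia). lra.
  - assert (pt N (ca2 b k') (cb2 b k') <= pt N (ca1 b k) (cb1 b k)) by (apply pt_le; auto; lia). lra.
Qed.

Lemma fson_in b N k x : ok N -> inN (fson b N k) x -> inN N x.
Proof.
  intros Hok [H1 H2]. pose proof (fson_lo b N k Hok). pose proof (fson_hi b N k Hok). split; lra.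
Qed.

Close Scope R_scope.

Section Scheme.
Variables (Y : Type) (opY : (Y -> Prop) -> Prop) (val : Y -> R) (Iv : list nat -> R -> Prop) (good : R -> Prop).
Hypothesis val_good : forall y, good (val y).
Hypothesis Iv_nil : forall x, Iv [] x.
Hypothesis Iv_cover : forall s x, good x -> Iv s x -> exists k, Iv (s ++ [k]) x.
Hypothesis Iv_disj : forall s k k' x, Iv (s ++ [k]) x -> Iv (s ++ [k']) x -> k = k'.
Hypothesis Iv_nest : forall s k x, Iv (s ++ [k]) x -> Iv s x.

Definition dig (s : list nat) (x : R) : nat := epsilon (inhabits 0%nat) (fun k => Iv (s ++ [k]) x).
Fixpoint pre (x : R) (M : nat) : list nat :=
  match M with O => [] | S M' => pre x M' ++ [dig (pre x M') x] end.
Definition phiS (y : Y) (i : nat) : nat := dig (pre (val y) i) (val y).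

Lemma pre_pref y M : pre (val y) M = pref (phiS y) M.
Proof. induction M; auto. simpl. rewrite pref_S, IHM. unfold phiS. rewrite IHM. auto. Qed.

Lemma pre_length x M : length (pre x M) = M.
Proof. induction M; simpl; auto. rewrite length_app, IHM. simpl. lia. Qed.

Lemma pre_Iv x M : good x -> Iv (pre x M) x.
Proof.
  intros Hg. induction M; simpl; auto.
  destruct (Iv_cover _ _ Hg IHM) as [k Hk]. unfold dig.
  apply (epsilon_spec (inhabits 0%nat) (fun k => Iv (pre x M ++ [k]) x)). eauto.
Qed.

Lemma Iv_pre x s : good x -> Iv s x -> s = pre x (length s).
Proof.
  intros Hg. induction s as [|k s IH] using rev_ind; intros H; auto.
  rewrite length_app. simpl. rewrite Nat.add_1_r. simpl.
  assert (Hs := Iv_nest _ _ _ H). rewrite <- (IH Hs).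
  f_equal. f_equal. apply (Iv_disj s k _ x H). unfold dig.
  apply (epsilon_spec (inhabits 0%nat) (fun k => Iv (s ++ [k]) x)). eauto.
Qed.

Lemma phiS_cyl y a M : (forall t, (t < M)%nat -> phiS y t = a t) <-> Iv (pref a M) (val y).
Proof.
  split.
  - intros H. replace (pref a M) with (pre (val y) M). apply pre_Iv; auto.
    rewrite pre_pref. apply list_ext_nth. rewrite !pref_length; auto.
    intros i Hi. rewrite pref_length in Hi. rewrite !pref_nth; auto.
  - intros H t Ht. pose proof (Iv_pre _ _ (val_good y) H) as E.
    rewrite pref_length, pre_pref in E. apply (f_equal (fun l => nth t l 0%nat)) in E.
    rewrite !pref_nth in E; auto.
Qed.

Hypothesis Hop_ext : forall U V, (forall y, U y <-> V y) -> opY U -> opY V.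
Hypothesis Hop_Iv : forall s, opY (fun y => Iv s (val y)).
Hypothesis Hval_inj : forall y y', val y = val y' -> y = y'.
Hypothesis Hshrink : forall a x x', (forall M, Iv (pref a M) x) -> (forall M, Iv (pref a M) x') -> x = x'.
Hypothesis Hlim : forall a, exists y, forall M, Iv (pref a M) (val y).
Hypothesis Hgood1 : forall y V, opY V -> V y -> exists N, forall j, (N <= j)%nat -> forall s,
  length s = S (2 * j) -> Iv s (val y) -> exists K, forall k y', (K <= k)%nat -> Iv (s ++ [k]) (val y') -> V y'.

Lemma phiS_inj : forall x y, phiS x = phiS y -> x = y.
Proof.
  intros x y E. apply Hval_inj. apply (Hshrink (phiS x)).
  - intros M. apply phiS_cyl. auto.
  - intros M. apply phiS_cyl. rewrite E. auto.
Qed.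

Lemma phiS_surj : forall a, exists y, phiS y = a.
Proof.
  intros a. destruct (Hlim a) as [y Hy]. exists y. extensionality t.
  apply (proj2 (phiS_cyl y a (S t)) (Hy (S t))). lia.
Qed.

Lemma phiS_open : forall a M, opY (fun y => forall t, (t < M)%nat -> phiS y t = a t).
Proof.
  intros a M. apply (Hop_ext (fun y => Iv (pref a M) (val y))); auto.
  intros y. rewrite phiS_cyl. tauto.
Qed.

Lemma phiS_good : forall y V, opY V -> V y -> exists N, forall j, (N <= j)%nat -> exists K, forall y',
  (forall t, (t < S (2 * j))%nat -> phiS y' t = phiS y t) -> (K <= phiS y' (S (2 * j)))%nat -> V y'.
Proof.
  intros y V HV Hy. destruct (Hgood1 y V HV Hy) as [N HN]. exists N. intros j Hj.
  destruct (HN j Hj (pref (phiS y) (S (2 * j)))) as [K HK].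
  - apply pref_length.
  - apply phiS_cyl. auto.
  - exists K. intros y' Hag Hk. apply (HK (phiS y' (S (2 * j)))); auto.
    replace (pref (phiS y) (S (2 * j)) ++ [phiS y' (S (2 * j))]) with (pref (phiS y') (S (S (2 * j)))).
    + apply phiS_cyl. auto.
    + rewrite pref_S. f_equal. apply list_ext_nth. rewrite !pref_length; auto.
      intros i Hi. rewrite pref_length in Hi. rewrite !pref_nth; auto.
Qed.
End Scheme.

Open Scope R_scope.

Definition zdec (k : nat) : Z := if Nat.even k then Z.of_nat (Nat.div2 k) else (- Z.of_nat (Nat.div2 k) - 1)%Z.

Lemma zdec_even j : zdec (2 * j) = Z.of_nat j.
Proof. unfold zdec. rewrite Nat.even_even, Nat.div2_double. auto. Qed.
Lemma zdec_odd j : zdec (2 * j + 1) = (- Z.of_nat j - 1)%Z.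
Proof. unfold zdec. rewrite Nat.even_odd, Nat.div2_odd'. auto. Qed.

Lemma zdec_surj z : exists k, zdec k = z.
Proof.
  destruct (Z.le_gt_cases 0 z).
  - exists (2 * Z.to_nat z)%nat. rewrite zdec_even. lia.
  - exists (2 * (Z.to_nat (- z) - 1) + 1)%nat. rewrite zdec_odd. lia.
Qed.

Lemma zdec_inj k k' : zdec k = zdec k' -> k = k'.
Proof.
  destruct (Nat.Even_or_Odd k) as [[j ->]|[j ->]]; destruct (Nat.Even_or_Odd k') as [[j' ->]|[j' ->]];
  rewrite ?zdec_even, ?zdec_odd; lia.
Qed.

Definition rootN (k : nat) : node := mkN (zdec k) (1, 0)%Z (1, 1)%Z.

Lemma rootN_ok k : ok (rootN k).
Proof. unfold ok, rootN; simpl. lia. Qed.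

Lemma inN_root k x : inN (rootN k) x <-> IZR (zdec k) <= x < IZR (zdec k) + 1.
Proof.
  unfold inN, lo, hi, rootN, vl; simpl. unfold Rdiv. rewrite Rmult_0_l, Rinv_1, Rmult_1_l, Rplus_0_r. tauto.
Qed.

Lemma pref_cons (a : nat -> nat) m : pref a (S m) = a 0%nat :: pref (fun i => a (S i)) m.
Proof. unfold pref. simpl. f_equal. rewrite <- seq_shift, map_map. auto. Qed.

Section Nodes.
Variable bt : nat -> bool.

Fixpoint go (d : nat) (N : node) (t : list nat) : node :=
  match t with [] => N | k :: t' => go (S d) (fson (bt d) N k) t' end.
Definition nd (k : nat) (t : list nat) := go 1 (rootN k) t.
Definition Iv (s : list nat) (x : R) : Prop := match s with [] => True | k :: t => inN (nd k t) x end.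

Lemma go_ok d N t : ok N -> ok (go d N t).
Proof. revert d N; induction t; intros d N H; simpl; auto. apply IHt. apply fson_ok; auto. Qed.

Lemma go_sig d N t : ok N -> (sgm N + Z.of_nat (length t) <= sgm (go d N t))%Z.
Proof.
  revert d N; induction t; intros d N H; simpl; [lia|].
  pose proof (fson_sig (bt d) N a H). pose proof (IHt (S d) _ (fson_ok (bt d) N a H)). lia.
Qed.

Lemma go_snoc d N t k : go d N (t ++ [k]) = fson (bt (d + length t)) (go d N t) k.
Proof.
  revert d N; induction t; intros d N; simpl. rewrite Nat.add_0_r; auto.
  rewrite IHt. f_equal. f_equal. lia.
Qed.

Lemma nd_ok k t : ok (nd k t).
Proof. apply go_ok, rootN_ok. Qed.

Lemma nd_sig k t : (Z.of_nat (length t) + 2 <= sgm (nd k t))%Z.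
Proof. unfold nd. pose proof (go_sig 1 (rootN k) t (rootN_ok k)). change (sgm (rootN k)) with 2%Z in H. lia. Qed.

Lemma nd_snoc k t k' : nd k (t ++ [k']) = fson (bt (S (length t))) (nd k t) k'.
Proof. unfold nd. rewrite go_snoc. auto. Qed.

Lemma Iv_nil x : Iv [] x.
Proof. exact I. Qed.

Lemma Iv_cover (good : R -> Prop) (HB : forall d x, bt d = true -> good x -> irrational x) :
  forall s x, good x -> Iv s x -> exists k, Iv (s ++ [k]) x.
Proof.
  intros s x Hg Hs. destruct s as [|k0 t].
  - destruct (zdec_surj (up x - 1)) as [k Hk]. exists k. change (inN (rootN k) x). apply inN_root. rewrite Hk.
    destruct (archimed x) as [H1 H2]. rewrite minus_IZR. lra.
  - simpl in Hs |- *. setoid_rewrite nd_snoc.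
    pose proof (nd_ok k0 t) as Hok. destruct (bt (S (length t))) eqn:Eb.
    + apply cover_true; auto; [|apply Hs].
      destruct Hs as [Hl _]. destruct Hl as [Hl|Hl]; auto. exfalso.
      apply (HB _ _ Eb Hg). destruct Hok as [Hs1 _].
      exists (Qmake (nz (nd k0 t) * fst (v1 (nd k0 t)) + snd (v1 (nd k0 t))) (Z.to_pos (fst (v1 (nd k0 t))))).
      rewrite <- Hl. unfold Q2R, lo, vl. simpl. rewrite Z2Pos.id by auto.
      rewrite plus_IZR, mult_IZR. field. apply not_0_IZR. lia.
    + apply cover_false; auto.
Qed.

Lemma Iv_disj s k k' x : Iv (s ++ [k]) x -> Iv (s ++ [k']) x -> k = k'.
Proof.
  destruct s as [|k0 t]; simpl.
  - change (inN (rootN k) x -> inN (rootN k') x -> k = k'). rewrite !inN_root. intros [H1 H2] [H3 H4]. apply zdec_inj.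
    assert (zdec k < zdec k' + 1)%Z by (apply lt_IZR; rewrite plus_IZR; simpl; lra).
    assert (zdec k' < zdec k + 1)%Z by (apply lt_IZR; rewrite plus_IZR; simpl; lra). lia.
  - rewrite !nd_snoc. apply fson_disj. apply nd_ok.
Qed.

Lemma Iv_nest s k x : Iv (s ++ [k]) x -> Iv s x.
Proof.
  destruct s as [|k0 t]; simpl; auto. rewrite nd_snoc. apply fson_in. apply nd_ok.
Qed.

Lemma Iv_sorg s : sorg_open (Iv s).
Proof.
  destruct s as [|k t]; intros x Hx.
  - exists x, (x + 1). split; [lra|]. intros; exact I.
  - exists (lo (nd k t)), (hi (nd k t)). split; auto.
Qed.

Lemma len_bound N : ok N -> hi N - lo N <= / IZR (sgm N - 1).
Proof.
  intros Hok. rewrite len_node by auto. destruct Hok as [H1 [H2 _]]. unfold sgm.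
  rewrite <- mult_IZR. apply Rinv_le_contravar. apply IZR_lt. lia. apply IZR_le. nia.
Qed.

Definition Nd (a : nat -> nat) (m : nat) : node := nd (a 0%nat) (pref (fun i => a (S i)) m).

Lemma Iv_Nd a m x : Iv (pref a (S m)) x <-> inN (Nd a m) x.
Proof. rewrite pref_cons. simpl. unfold Nd. tauto. Qed.

Lemma Nd_S a m : Nd a (S m) = fson (bt (S m)) (Nd a m) (a (S m)).
Proof. unfold Nd. rewrite pref_S, nd_snoc, pref_length. auto. Qed.

Lemma Nd_ok a m : ok (Nd a m).
Proof. apply nd_ok. Qed.

Lemma Nd_sig a m : (Z.of_nat m + 2 <= sgm (Nd a m))%Z.
Proof. unfold Nd. pose proof (nd_sig (a 0%nat) (pref (fun i => a (S i)) m)). rewrite pref_length in H. auto. Qed.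

Lemma Nd_lo_mono a m m' : (m <= m')%nat -> lo (Nd a m) <= lo (Nd a m').
Proof.
  induction 1; [lra|]. rewrite Nd_S. pose proof (fson_lo (bt (S m0)) (Nd a m0) (a (S m0)) (Nd_ok a m0)). lra.
Qed.

Lemma Nd_hi_mono a m m' : (m <= m')%nat -> hi (Nd a m') <= hi (Nd a m).
Proof.
  induction 1; [lra|]. rewrite Nd_S. pose proof (fson_hi (bt (S m0)) (Nd a m0) (a (S m0)) (Nd_ok a m0)). lra.
Qed.

Lemma Iv_shrink a x x' : (forall M, Iv (pref a M) x) -> (forall M, Iv (pref a M) x') -> x = x'.
Proof.
  intros H H'. destruct (Req_dec x x') as [|Hne]; auto. exfalso.
  destruct (small_inv (Rabs (x - x'))) as [k Hk]. apply Rabs_pos_lt. lra.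
  pose proof (proj1 (Iv_Nd a k x) (H (S k))) as [A1 A2].
  pose proof (proj1 (Iv_Nd a k x') (H' (S k))) as [B1 B2].
  pose proof (len_bound _ (Nd_ok a k)). pose proof (Nd_sig a k).
  specialize (Hk (sgm (Nd a k) - 1)%Z ltac:(lia)).
  assert (Rabs (x - x') < hi (Nd a k) - lo (Nd a k)) by (apply Rabs_def1; lra). lra.
Qed.

Lemma lim_exists a : exists c, forall m, inN (Nd a m) c.
Proof.
  set (E := fun z => exists m, z = lo (Nd a m)).
  assert (Hub : forall m, is_upper_bound E (hi (Nd a m))).
  { intros m z [m' ->]. destruct (Nat.le_ge_cases m m').
    - pose proof (lohi _ (Nd_ok a m')). pose proof (Nd_hi_mono a m m' H). lra.
    - pose proof (lohi _ (Nd_ok a m)). pose proof (Nd_lo_mono a m' m H). lra. }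
  destruct (completeness E) as [c [Hc1 Hc2]].
  - exists (hi (Nd a 0)). apply Hub.
  - exists (lo (Nd a 0)). exists 0%nat. auto.
  - exists c. intros m. split.
    + apply Hc1. exists m. auto.
    + pose proof (Hc2 _ (Hub (S m))). rewrite Nd_S in H. pose proof (fson_hi (bt (S m)) (Nd a m) (a (S m)) (Nd_ok a m)).
      rewrite <- Nd_S in *. lra.
Qed.

Lemma frac_lt a b c d : 0 < b -> 0 < d -> a / b < c / d -> a * d < c * b.
Proof.
  intros Hb Hd H. replace (a * d) with ((a / b) * (b * d)) by (field; lra).
  replace (c * b) with ((c / d) * (b * d)) by (field; lra).
  apply Rmult_lt_compat_r; auto. apply Rmult_lt_0_compat; auto.
Qed.

Lemma farey_rat N q : ok N -> lo N < Q2R q -> Q2R q < hi N -> (sgm N <= Z.pos (Qden q))%Z.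
Proof.
  destruct N as [n [s1 y1] [s2 y2]]. unfold ok, sgm, lo, hi, vl, Q2R; simpl. intros [H1 [H2 H3]] L U.
  set (P := Qnum q) in *. set (D := Z.pos (Qden q)) in *. assert (HD : (0 < D)%Z) by (unfold D; lia).
  replace (IZR n + IZR y1 / IZR s1) with (IZR (n * s1 + y1) / IZR s1) in L
    by (rewrite plus_IZR, mult_IZR; field; apply not_0_IZR; lia).
  replace (IZR n + IZR y2 / IZR s2) with (IZR (n * s2 + y2) / IZR s2) in U
    by (rewrite plus_IZR, mult_IZR; field; apply not_0_IZR; lia).
  fold (IZR P / IZR D) in L, U.
  apply frac_lt in L; try (apply IZR_lt; lia). apply frac_lt in U; try (apply IZR_lt; lia).
  rewrite <- !mult_IZR in L, U. apply lt_IZR in L. apply lt_IZR in U.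
  set (A := (P * s1 - (n * s1 + y1) * D)%Z). set (B := ((n * s2 + y2) * D - P * s2)%Z).
  assert (E : (s2 * A + s1 * B = D)%Z).
  { unfold A, B. replace D with (D * (s1 * y2 - s2 * y1))%Z at 3 by (rewrite H3; ring). ring. }
  assert (1 <= A)%Z by (unfold A; lia). assert (1 <= B)%Z by (unfold B; lia).
  assert (s2 <= s2 * A)%Z by nia. assert (s1 <= s1 * B)%Z by nia. lia.
Qed.

Lemma lim_irr a c : (forall m, bt (S (S (2 * m))) = true) -> (forall m, inN (Nd a m) c) -> irrational c.
Proof.
  intros Hbt Hc [q Hq].
  assert (Hs : forall m, lo (Nd a m) < c).
  { intros m. specialize (Hc (S (S (2 * m)))). destruct Hc as [Hc _].
    rewrite Nd_S, Hbt in Hc. pose proof (fson_lo_strict (Nd a (S (2 * m))) (a (S (S (2 * m)))) (Nd_ok _ _)).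
    pose proof (Nd_lo_mono a m (S (2 * m)) ltac:(lia)). lra. }
  set (m := Pos.to_nat (Qden q)).
  pose proof (farey_rat (Nd a m) q (Nd_ok a m) ltac:(rewrite <- Hq; apply Hs) ltac:(rewrite <- Hq; apply Hc)).
  pose proof (Nd_sig a m). unfold m in *. lia.
Qed.

Lemma Iv_good1 (b x : R) (Hodd : forall j, bt (S (2 * j)) = false) : x < b -> exists N, forall j, (N <= j)%nat -> forall s,
  length s = S (2 * j) -> Iv s x -> exists K, forall k x', (K <= k)%nat -> Iv (s ++ [k]) x' -> x <= x' < b.
Proof.
  intros Hxb. destruct (small_inv (b - x) ltac:(lra)) as [N0 HN0]. exists N0. intros j Hj s Hl Hs.
  destruct s as [|k0 t]; [discriminate|]. injection Hl as Hl. simpl in Hs.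
  set (Nn := nd k0 t) in *. pose proof (nd_ok k0 t) as Hok. fold Nn in Hok.
  pose proof (len_bound Nn Hok). pose proof (nd_sig k0 t). fold Nn in H0.
  specialize (HN0 (sgm Nn - 1)%Z ltac:(lia)).
  destruct Hs as [Hs1 Hs2].
  destruct (approach_hi Nn x Hok Hs2) as [K HK]. exists K. intros k x' Hk Hx'.
  change (inN (nd k0 (t ++ [k])) x') in Hx'. rewrite nd_snoc in Hx'. replace (length t) with (2 * j)%nat in Hx' by lia. rewrite Hodd in Hx'. fold Nn in Hx'. destruct Hx' as [X1 X2].
  rewrite lo_son in X1. unfold ca1, cb1 in X1.
  assert (pt Nn 1 (Z.of_nat K) <= pt Nn 1 (Z.of_nat k)) by (apply pt_le; auto; lia).
  pose proof (fson_hi false Nn k Hok). split; lra.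
Qed.
End Nodes.

Open Scope R_scope.

Definition BaseCoding (Y : Type) (opY : (Y -> Prop) -> Prop) : Prop :=
  exists phi : Y -> nat -> nat,
  (forall x y, phi x = phi y -> x = y) /\
  (forall a, exists y, phi y = a) /\
  (forall a M, opY (fun y => forall t, (t < M)%nat -> phi y t = a t)) /\
  (forall y V, opY V -> V y -> exists N, forall j, (N <= j)%nat -> exists K, forall y',
    (forall t, (t < S (2 * j))%nat -> phi y' t = phi y t) -> (K <= phi y' (S (2 * j)))%nat -> V y').

Lemma base_gen (Y : Type) (opY : (Y -> Prop) -> Prop) (val : Y -> R) (good : R -> Prop) (bt : nat -> bool)
  (val_good : forall y, good (val y))
  (HB : forall d x, bt d = true -> good x -> irrational x)
  (Hodd : forall j, bt (S (2 * j)) = false)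
  (Hop_ext : forall U V, (forall y, U y <-> V y) -> opY U -> opY V)
  (Hop_Iv : forall s, opY (fun y => Iv bt s (val y)))
  (Hval_inj : forall y y', val y = val y' -> y = y')
  (Hlim : forall a, exists y, forall m, inN (Nd bt a m) (val y))
  (Hint : forall V y, opY V -> V y -> exists b, val y < b /\ forall y', val y <= val y' < b -> V y') :
  BaseCoding Y opY.
Proof.
  assert (Hc := Iv_cover bt good HB).
  exists (phiS Y val (Iv bt)). refine (conj _ (conj _ (conj _ _))).
  - apply (phiS_inj Y val (Iv bt) good val_good (Iv_nil bt) Hc (Iv_disj bt) (Iv_nest bt) Hval_inj (Iv_shrink bt)).
  - apply (phiS_surj Y val (Iv bt) good val_good (Iv_nil bt) Hc (Iv_disj bt) (Iv_nest bt)).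
    intros a. destruct (Hlim a) as [y Hy]. exists y. intros [|m]. exact I. apply Iv_Nd. auto.
  - apply (phiS_open Y opY val (Iv bt) good val_good (Iv_nil bt) Hc (Iv_disj bt) (Iv_nest bt) Hop_ext Hop_Iv).
  - apply (phiS_good Y opY val (Iv bt) good val_good (Iv_nil bt) Hc (Iv_disj bt) (Iv_nest bt)).
    intros y V HV Hy. destruct (Hint V y HV Hy) as [b [Hb1 Hb2]].
    destruct (Iv_good1 bt b (val y) Hodd Hb1) as [N HN]. exists N. intros j Hj s Hl Hs.
    destruct (HN j Hj s Hl Hs) as [K HK]. exists K. intros k y' Hk Hy'. apply Hb2. apply (HK k); auto.
Qed.

Lemma base_RS : BaseCoding R sorg_open.
Proof.
  apply (base_gen R sorg_open (fun x => x) (fun _ => True) (fun _ => false)); auto.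
  - intros d x H; discriminate.
  - intros U V H HU x Hx. apply H in Hx. destruct (HU x Hx) as [a [b [H1 H2]]]. exists a, b. split; auto.
    intros y Hy. apply H. auto.
  - intros s. apply Iv_sorg.
  - intros a. destruct (lim_exists (fun _ => false) a) as [c Hc]. eauto.
  - intros V y HV Hy. destruct (HV y Hy) as [a [b [H1 H2]]]. exists b. split. lra. intros y' Hy'. apply H2. lra.
Qed.

Lemma base_Irr : BaseCoding Irr irr_open.
Proof.
  apply (base_gen Irr irr_open (@proj1_sig R irrational) irrational Nat.even); auto.
  - intros y. exact (proj2_sig y).
  - intros j. replace (S (2 * j)) with (2 * j + 1)%nat by lia. apply Nat.even_odd.
  - intros U V H [W [HW HUW]]. exists W. split; auto. intros x. rewrite <- HUW. split; apply H.
  - intros s. exists (Iv Nat.even s). split. apply Iv_sorg. tauto.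
  - intros [x hx] [y hy]. simpl. intros ->. f_equal. apply proof_irrelevance.
  - intros a. destruct (lim_exists Nat.even a) as [c Hc].
    assert (Hi : irrational c).
    { apply (lim_irr Nat.even a c); auto. intros m. rewrite Nat.even_succ_succ. apply Nat.even_even. }
    exists (exist _ c Hi). simpl. auto.
  - intros V y [W [HW HVW]] Hy. apply HVW in Hy. destruct (HW _ Hy) as [a [b [H1 H2]]].
    exists b. split. apply H1. intros y' Hy'. apply HVW. apply H2. destruct H1, Hy'. split; [eapply Rle_trans; eauto | auto].
Qed.

Lemma prod_fin (Y : Type) (opY : (Y -> Prop) -> Prop) n : (1 <= n)%nat -> BaseCoding Y opY ->
  has_pi_tree (@prod_open (fin n) Y opY).
Proof.
  intros Hn [phi [H1 [H2 [H3 H4]]]].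
  set (d := fun j : nat => match lt_dec j n with left h => exist (fun i => (i < n)%nat) j h
                           | right _ => exist (fun i => (i < n)%nat) 0%nat Hn end).
  apply (prod_has_pi_tree Y opY phi H1 H2 H3 H4 (fin n) (@proj1_sig nat (fun i => (i < n)%nat)) d (fun r => Nat.min (S r) n)).
  - intros r; lia.
  - intros r; lia.
  - intros r r' H; lia.
  - intros j r r' H H'; lia.
  - intros [i hi]. unfold d; simpl. destruct (lt_dec i n) as [h|h]; [|lia]. f_equal. apply proof_irrelevance.
  - intros j r Hj. unfold d. destruct (lt_dec j n); simpl; lia.
  - intros [i hi] r; cbn [proj1_sig]. intros; lia.
Qed.

Lemma prod_nat (Y : Type) (opY : (Y -> Prop) -> Prop) : BaseCoding Y opY ->
  has_pi_tree (@prod_open nat Y opY).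
Proof.
  intros [phi [H1 [H2 [H3 H4]]]].
  apply (prod_has_pi_tree Y opY phi H1 H2 H3 H4 nat (fun i => i) (fun i => i) S); intros; auto; lia.
Qed.

Close Scope R_scope.
Theorem corollary21 :
  (forall n : nat, (1 <= n)%nat ->
     has_pi_tree (@prod_open (fin n) R sorg_open) /\
     has_pi_tree (@prod_open (fin n) Irr irr_open)) /\
  (has_pi_tree (@prod_open nat R sorg_open) /\
   has_pi_tree (@prod_open nat Irr irr_open)).
Proof.
  split.
  - intros n Hn. split; apply prod_fin; auto using base_RS, base_Irr.
  - split; apply prod_nat; auto using base_RS, base_Irr.
Qed.
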